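(* Let $N\geq1$, let $\mathcal{H}_{X_1},\dots,\mathcal{H}_{X_N}$ be finite-dimensional Hilbert spaces and let $\rho=|V\rangle\langle V|$ be a pure state on $\mathcal{H}_{X_1}\otimes\cdots\otimes\mathcal{H}_{X_N}$. For each $i$, let $\lambda^i_1\geq\lambda^i_2\geq\cdots$ be the eigenvalues of the reduced state $\rho_{X_i}$ in decreasing order and $|e^i_1\rangle,|e^i_2\rangle,\dots$ a corresponding orthonormal eigenbasis of $\mathcal{H}_{X_i}$ (so $\langle e^i_a|\rho_{X_i}|e^i_b\rangle=\lambda^i_a\delta_{ab}$). Write $|V\rangle=\sum_{x_1,\dots,x_N}V_{x_1\dots x_N}|e^1_{x_1}\rangle\otimes\cdots\otimes|e^N_{x_N}\rangle$, and set $\epsilon_i=1-\lambda^i_1$ and $\varepsilon=\sum_{i=1}^N\epsilon_i$. Then $$|V_{1\dots1}|^2\geq 1-\varepsilon.$$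
   Context: $\rho_{X_i}$ denotes the partial trace of $\rho$ over all tensor factors except $\mathcal{H}_{X_i}$. $V_{1\dots1}$ is the coefficient of $|e^1_1\rangle\otimes\cdots\otimes|e^N_1\rangle$. *)

(* Defs.v *)
From HB Require Import structures.
From mathcomp Require Import all_boot all_order all_algebra.
From mathcomp Require Import complex.
From mathcomp Require Import reals.
Set Implicit Arguments. Unset Strict Implicit. Unset Printing Implicit Defensive.
Import Order.TTheory GRing.Theory Num.Theory.
Local Open Scope ring_scope.

(* Multi-indices of the computational basis of H_{X_1} ⊗ ... ⊗ H_{X_N},
   where dim H_{X_i} = (d i).+1 (every factor has dimension >= 1). *)
Definition multi_index (N : nat) (d : 'I_N -> nat) : finType :=
  {dffun forall i : 'I_N, 'I_(d i).+1}.

(* Reduced state rho_{X_i} of the pure state |V><V| (partial trace over all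
   factors except i), as a matrix in the computational basis of H_{X_i}:
   (rho_{X_i})_{a b} = sum_{x,y : x_i = a, y_i = b, x_j = y_j (j <> i)} V_x conj(V_y). *)
Definition reduced_state (R : rcfType) (N : nat) (d : 'I_N -> nat)
  (V : multi_index d -> R[i]) (i : 'I_N) : 'M[R[i]]_((d i).+1) :=
  \matrix_(a, b)
    \sum_(x : multi_index d) \sum_(y : multi_index d)
      if [&& x i == a, y i == b & [forall j, (j != i) ==> (x j == y j :> nat)]]
      then V x * (V y)^* else 0.

(* Main.v *)
From HB Require Import structures.
From mathcomp Require Import all_boot all_order all_algebra.
From mathcomp Require Import complex reals ring.
Require Import Defs.
From Stdlib Require Import FunctionalExtensionality.
Set Implicit Arguments. Unset Strict Implicit. Unset Printing Implicit Defensive.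
Import Order.TTheory GRing.Theory Num.Theory.
Local Open Scope ring_scope.

Definition dot (C : numClosedFieldType) (T : finType) (f g : T -> C) : C :=
  \sum_x f x * (g x)^*.

Lemma dotBl (C : numClosedFieldType) (T : finType) (f g h : T -> C) :
  dot (fun x => f x - g x) h = dot f h - dot g h.
Proof. by rewrite /dot -sumrB; apply: eq_bigr => x _; rewrite mulrBl. Qed.

Lemma dotBr (C : numClosedFieldType) (T : finType) (f g h : T -> C) :
  dot h (fun x => f x - g x) = dot h f - dot h g.
Proof. by rewrite /dot -sumrB; apply: eq_bigr => x _; rewrite rmorphB mulrBr. Qed.

Lemma dotC (C : numClosedFieldType) (T : finType) (f g : T -> C) :
  dot g f = (dot f g)^*.
Proof.
rewrite /dot rmorph_sum; apply: eq_bigr => x _.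
by rewrite rmorphM /= conjCK mulrC.
Qed.

Lemma dot_ge0 (C : numClosedFieldType) (T : finType) (f : T -> C) :
  0 <= dot f f.
Proof. by rewrite /dot; apply: sumr_ge0 => x _; apply: mul_conjC_ge0. Qed.

Definition proj (C : numClosedFieldType) (T : finType)
  (A : (T -> C) -> T -> C) :=
  [/\ forall f g, dot (A f) g = dot f (A g), forall f, A (A f) = A f
    & forall f g, A (fun x => f x - g x) = fun x => A f x - A g x].

Lemma dot_proj (C : numClosedFieldType) (T : finType) A (f : T -> C) :
  proj A -> dot (A f) f = dot (A f) (A f).
Proof. by case=> sa id _; rewrite -{1}id sa. Qed.

Lemma pythag (C : numClosedFieldType) (T : finType) A (f : T -> C) :
  proj A -> dot f f - dot (A f) (A f) =
            dot (fun x => f x - A f x) (fun x => f x - A f x).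
Proof.
move=> pA; have := dot_proj f pA; case: pA => sa _ _ h.
have h2 : dot f (A f) = dot (A f) (A f) by rewrite -sa h.
rewrite dotBl !dotBr h h2.
by rewrite subrr subr0.
Qed.

Lemma contraction (C : numClosedFieldType) (T : finType) A (f : T -> C) :
  proj A -> dot (A f) (A f) <= dot f f.
Proof. by move=> pA; rewrite -subr_ge0 pythag //; apply: dot_ge0. Qed.

Lemma proj_comp (C : numClosedFieldType) (T : finType) (A B : (T -> C) -> T -> C) :
  proj A -> proj B -> (forall f, A (B f) = B (A f)) ->
  proj (fun f => A (B f)).
Proof.
case=> saA idA adA [saB idB adB] cAB; split.
- by move=> f g; rewrite saA saB cAB.
- by move=> f; rewrite cAB idA -cAB idB.
- by move=> f g; rewrite adB adA.
Qed.

Lemma key_step (C : numClosedFieldType) (T : finType) (A B : (T -> C) -> T -> C) v :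
  proj A -> proj B -> (forall f, A (B f) = B (A f)) ->
  dot (B v) v - dot (A (B v)) v <= dot v v - dot (A v) v.
Proof.
move=> pA pB cAB.
have pAB := proj_comp pA pB cAB.
rewrite (dot_proj v pB) (dot_proj v pAB) (dot_proj v pA) /=.
rewrite pythag // pythag //.
have -> : (fun x => B v x - A (B v) x) = B (fun x => v x - A v x).
  by case: pB => _ _ ->; rewrite cAB.
exact: contraction.
Qed.

Definition Qop (C : numClosedFieldType) (T : finType) (I : Type)
  (P : I -> (T -> C) -> T -> C) (s : seq I) : (T -> C) -> T -> C :=
  foldr (fun i acc f => P i (acc f)) id s.

Lemma Qop_proj (C : numClosedFieldType) (T : finType) (I : Type)
  (P : I -> (T -> C) -> T -> C) (s : seq I) :
  (forall i, proj (P i)) -> (forall i j f, P i (P j f) = P j (P i f)) ->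
  proj (Qop P s) /\ (forall j f, P j (Qop P s f) = Qop P s (P j f)).
Proof.
move=> pP cP; elim: s => [|i s [pQ cQ]] /=.
  split; last by [].
  split => // f g; apply: functional_extensionality => x //.
split; first by apply: proj_comp => // f; rewrite cQ.
by move=> j f; rewrite cP cQ.
Qed.

Lemma main_ineq (C : numClosedFieldType) (T : finType) (I : Type)
  (P : I -> (T -> C) -> T -> C) (s : seq I) v :
  (forall i, proj (P i)) -> (forall i j f, P i (P j f) = P j (P i f)) ->
  dot v v - dot (Qop P s v) v <= \sum_(i <- s) (dot v v - dot (P i v) v).
Proof.
move=> pP cP; elim: s => [|i s IH]; first by rewrite big_nil /= subrr.
rewrite big_cons /=.
have [pQ cQ] := Qop_proj s pP cP.
have -> : dot v v - dot (P i (Qop P s v)) v =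
   (dot v v - dot (Qop P s v) v) + (dot (Qop P s v) v - dot (P i (Qop P s v)) v).
  by rewrite addrA subrK.
rewrite addrC lerD //.
by apply: key_step => // f; rewrite cQ.
Qed.
Definition upd (N : nat) (d : 'I_N -> nat) (x : multi_index d) (i : 'I_N)
  (k : 'I_(d i).+1) : multi_index d := finfun (dfwith (fun j => x j) k).
Arguments upd {N d} x i k.

Lemma upd_in (N : nat) (d : 'I_N -> nat) (x : multi_index d) (i : 'I_N) k : upd x i k i = k.
Proof. by rewrite /upd ffunE dfwith_in. Qed.

Lemma upd_out (N : nat) (d : 'I_N -> nat) (x : multi_index d) (i j : 'I_N) k : i != j -> upd x i k j = x j.
Proof. by move=> ne; rewrite /upd ffunE dfwith_out. Qed.

Lemma upd_upd (N : nat) (d : 'I_N -> nat) (x : multi_index d) (i : 'I_N) k l : upd (upd x i k) i l = upd x i l.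
Proof.
apply/ffunP => j; case: (eqVneq i j) => [<-|ne]; first by rewrite !upd_in.
by rewrite !upd_out.
Qed.

Lemma upd_id (N : nat) (d : 'I_N -> nat) (x : multi_index d) (i : 'I_N) : upd x i (x i) = x.
Proof.
apply/ffunP => j; case: (eqVneq i j) => [<-|ne]; first by rewrite !upd_in.
by rewrite !upd_out.
Qed.

Lemma upd_comm (N : nat) (d : 'I_N -> nat) (x : multi_index d) (i j : 'I_N) k l : i != j ->
  upd (upd x i k) j l = upd (upd x j l) i k.
Proof.
move=> ne; apply/ffunP => m.
case: (eqVneq j m) => [<-|nj]; first by rewrite upd_in upd_out // upd_in.
rewrite upd_out //; case: (eqVneq i m) => [<-|ni]; first by rewrite !upd_in.
by rewrite !upd_out.
Qed.

Lemma swap_sum (C : nmodType) (N : nat) (d : 'I_N -> nat) (i : 'I_N)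
  (F : multi_index d -> 'I_(d i).+1 -> C) :
  \sum_x \sum_k F x k = \sum_x \sum_k F (upd x i k) (x i).
Proof.
rewrite !pair_bigA /=.
pose h (p : multi_index d * 'I_(d i).+1) := (upd p.1 i p.2, p.1 i).
have hK : involutive h.
  by case=> x k; rewrite /h /= upd_upd upd_id upd_in.
by rewrite (reindex_inj (inv_inj hK)) /=.
Qed.

Definition Pop (R : realType) (N : nat) (d : 'I_N -> nat)
  (e : forall i : 'I_N, 'M[R[i]]_((d i).+1)) (i : 'I_N)
  (f : multi_index d -> R[i]) : multi_index d -> R[i] :=
  fun x => e i (x i) ord0 * \sum_k (e i k ord0)^* * f (upd x i k).

Lemma Pop_proj (R : realType) (N : nat) (d : 'I_N -> nat)
  (e : forall i : 'I_N, 'M[R[i]]_((d i).+1)) (i : 'I_N) :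
  \sum_(k : 'I_(d i).+1) (e i k ord0)^* * e i k ord0 = 1 ->
  proj (Pop e i).
Proof.
move=> ortho; split.
- move=> f g; rewrite /dot /Pop.
  under eq_bigr => x _ do rewrite big_distrr big_distrl /=.
  rewrite swap_sum; apply: eq_bigr => x _.
  rewrite rmorphM rmorph_sum big_distrr big_distrr /=; apply: eq_bigr => k _.
  rewrite upd_in upd_upd upd_id rmorphM /= conjCK.
  ring.
- move=> f; apply: functional_extensionality => x; rewrite /Pop.
  have E k : e i (upd x i k i) ord0 * \sum_l (e i l ord0)^* * f (upd (upd x i k) i l)
     = e i k ord0 * \sum_l (e i l ord0)^* * f (upd x i l).
    by rewrite upd_in; congr (_ * _); apply: eq_bigr => l _; rewrite upd_upd.
  under eq_bigr => k _ do rewrite E mulrA.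
  by rewrite -big_distrl /= ortho mul1r.
- move=> f g; apply: functional_extensionality => x; rewrite /Pop -mulrBr -sumrB.
  by congr (_ * _); apply: eq_bigr => k _; rewrite mulrBr.
Qed.

Lemma Pop_comm (R : realType) (N : nat) (d : 'I_N -> nat)
  (e : forall i : 'I_N, 'M[R[i]]_((d i).+1)) (i j : 'I_N) f :
  Pop e i (Pop e j f) = Pop e j (Pop e i f).
Proof.
case: (eqVneq i j) => [->//|ne]; have ne' : j != i by rewrite eq_sym.
apply: functional_extensionality => x; rewrite /Pop.
transitivity (\sum_k \sum_l e i (x i) ord0 * e j (x j) ord0 *
   ((e i k ord0)^* * (e j l ord0)^*) * f (upd (upd x i k) j l)).
  rewrite big_distrr; apply: eq_bigr => k _ /=; rewrite upd_out // !big_distrr.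
  by apply: eq_bigr => l _ /=; ring.
rewrite exchange_big big_distrr; apply: eq_bigr => l _ /=.
rewrite upd_out // !big_distrr; apply: eq_bigr => k _ /=; rewrite upd_comm //; ring.
Qed.

Lemma sum_if_eq (C : nmodType) (T : finType) (a : T) (F : T -> C) :
  \sum_k (if a == k then F k else 0) = F a.
Proof.
rewrite -big_mkcond /=; under eq_bigl => k do rewrite eq_sym.
exact: big_pred1_eq.
Qed.

Lemma cond_upd (N : nat) (d : 'I_N -> nat) (i : 'I_N) (x y : multi_index d) :
  [forall j, (j != i) ==> (x j == y j :> nat)] = (x == upd y i (x i)).
Proof.
apply/forallP/eqP.
  move=> H; apply/ffunP => j; case: (eqVneq i j) => [<-|ne]; first by rewrite upd_in.
  rewrite upd_out //; apply/val_inj/eqP; have := H j; by rewrite eq_sym ne.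
move=> E j; apply/implyP => nj; rewrite E upd_out // eq_sym //.
Qed.

Lemma upd_eq (N : nat) (d : 'I_N -> nat) (i : 'I_N) (x y : multi_index d) k :
  (x == upd y i k) = (x i == k) && (x == upd y i (x i)).
Proof.
apply/eqP/andP => [E|[/eqP <- /eqP //]].
have xik : x i = k by rewrite E upd_in.
by split; [apply/eqP | rewrite xik; apply/eqP].
Qed.

Lemma sum_cond (C : nmodType) (N : nat) (d : 'I_N -> nat) (i : 'I_N)
  (y : multi_index d) (G : multi_index d -> C) :
  \sum_(x : multi_index d) (if [forall j, (j != i) ==> (x j == y j :> nat)] then G x else 0)
  = \sum_k G (upd y i k).
Proof.
under [RHS]eq_bigr => k _ do rewrite -(sum_if_eq (upd y i k) G).
rewrite exchange_big; apply: eq_bigr => x _ /=.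
under eq_bigr => k _ do rewrite eq_sym upd_eq.
rewrite cond_upd.
case: (x == upd y i (x i)); last by rewrite big1 // => k _; rewrite andbF.
under eq_bigr => k _ do rewrite andbT.
by rewrite (sum_if_eq (x i) (fun _ => G x)).
Qed.

Lemma sum2_if (C : nmodType) (T1 T2 : finType) (a : T1) (b : T2) (c : bool)
  (H : T1 -> T2 -> C) :
  \sum_k \sum_l (if [&& a == k, b == l & c] then H k l else 0) = if c then H a b else 0.
Proof.
rewrite (bigD1 a) //= [X in _ + X]big1 ?addr0; last first.
  move=> k nk; apply: big1 => l _; by rewrite (negbTE (_ : a != k)) // eq_sym.
rewrite eqxx /= (bigD1 b) //= [X in _ + X]big1 ?addr0; last first.
  by move=> l nl; rewrite (negbTE (_ : b != l)) // eq_sym.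
by rewrite eqxx.
Qed.

Lemma Pop_lam (R : realType) (N : nat) (d : 'I_N -> nat)
  (e : forall i : 'I_N, 'M[R[i]]_((d i).+1)) (V : multi_index d -> R[i]) (i : 'I_N) :
  dot (Pop e i V) V = \sum_k \sum_l (e i k ord0)^* * reduced_state V i k l * e i l ord0.
Proof.
transitivity (\sum_(y : multi_index d) \sum_(x : multi_index d)
   (if [forall j, (j != i) ==> (x j == y j :> nat)] then
      (e i (x i) ord0)^* * (V x * (V y)^*) * e i (y i) ord0 else 0)).
  rewrite /dot /Pop; apply: eq_bigr => y _.
  rewrite (sum_cond i y (fun x => (e i (x i) ord0)^* * (V x * (V y)^*) * e i (y i) ord0)).
  rewrite big_distrr big_distrl /=; apply: eq_bigr => k _; rewrite upd_in; ring.
have R1 k l : (e i k ord0)^* * reduced_state V i k l * e i l ord0 =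
   \sum_(x : multi_index d) \sum_(y : multi_index d)
     (if [&& x i == k, y i == l & [forall j, (j != i) ==> (x j == y j :> nat)]]
      then (e i k ord0)^* * (V x * (V y)^*) * e i l ord0 else 0).
  rewrite /reduced_state mxE big_distrr big_distrl /=; apply: eq_bigr => x _.
  rewrite big_distrr big_distrl /=; apply: eq_bigr => y _.
  by case: ifP; rewrite ?mulr0 ?mul0r.
under [RHS]eq_bigr => k _ do under eq_bigr => l _ do rewrite R1.
under [RHS]eq_bigr => k _ do rewrite exchange_big.
rewrite [RHS]exchange_big [LHS]exchange_big; apply: eq_bigr => x _.
under [RHS]eq_bigr => k _ do rewrite exchange_big.
rewrite [RHS]exchange_big; apply: eq_bigr => y _ /=.
by rewrite (sum2_if (x i) (y i) _ (fun k l => (e i k ord0)^* * (V x * (V y)^*) * e i l ord0)).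
Qed.

Definition Fs (R : realType) (N : nat) (d : 'I_N -> nat)
  (e : forall i : 'I_N, 'M[R[i]]_((d i).+1)) (V : multi_index d -> R[i])
  (s : seq 'I_N) (x : multi_index d) : R[i] :=
  \sum_(z : multi_index d)
    (if [forall j, (j \notin s) ==> (z j == x j)] then
       (\prod_(i <- s) (e i (z i) ord0)^*) * V z else 0).

Lemma cond_cons (N : nat) (d : 'I_N -> nat) (i : 'I_N) (s : seq 'I_N)
  (x z : multi_index d) k : i \notin s ->
  [forall j, (j \notin s) ==> (z j == upd x i k j)] =
  (z i == k) && [forall j, (j \notin i :: s) ==> (z j == x j)].
Proof.
move=> nis; apply/forallP/andP.
  move=> H; split; first by have := H i; rewrite nis upd_in.
  apply/forallP => j; apply/implyP; rewrite in_cons negb_or => /andP[nji njs].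
  by have := H j; rewrite njs upd_out // eq_sym.
case=> /eqP zk /forallP H j; apply/implyP => njs.
case: (eqVneq i j) => [eij|nij].
  by move: njs; rewrite -eij upd_in zk eqxx.
have := H j; rewrite in_cons negb_or njs eq_sym nij upd_out //.
Qed.

Lemma Q_form (R : realType) (N : nat) (d : 'I_N -> nat)
  (e : forall i : 'I_N, 'M[R[i]]_((d i).+1)) (V : multi_index d -> R[i])
  (s : seq 'I_N) : uniq s ->
  Qop (Pop e) s V = fun x => (\prod_(i <- s) e i (x i) ord0) * Fs e V s x.
Proof.
elim: s => [|i s IH] /=.
  move=> _; apply: functional_extensionality => x; rewrite big_nil mul1r /Fs.
  under eq_bigr => z _ do rewrite big_nil mul1r.
  have E (z : multi_index d) : [forall j, (j \notin [::]) ==> (z j == x j)] = (x == z).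
    apply/forallP/eqP => [H|<- j]; last by rewrite eqxx implybT.
    by apply/ffunP => j; apply/esym/eqP; have := H j.
  under eq_bigr => z _ do rewrite E.
  by rewrite sum_if_eq.
case/andP => nis us; rewrite IH //; apply: functional_extensionality => x.
rewrite /Pop big_cons -mulrA; congr (_ * _).
transitivity (\sum_k (e i k ord0)^* *
   (\prod_(j <- s) e j (x j) ord0 * Fs e V s (upd x i k))).
  apply: eq_bigr => k _; congr (_ * (_ * _)).
  apply: eq_big_seq => j js; rewrite upd_out //.
  by apply/eqP => ij; move: nis; rewrite ij js.
rewrite (eq_bigr (fun k => \prod_(j <- s) e j (x j) ord0 * ((e i k ord0)^* * Fs e V s (upd x i k)))); last by move=> k _; ring.
rewrite -big_distrr /=; congr (_ * _).
rewrite /Fs.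
under eq_bigr => k _ do rewrite big_distrr /=.
rewrite exchange_big; apply: eq_bigr => z _ /=.
under eq_bigr => k _ do rewrite cond_cons //.
case: [forall j, _]; last by rewrite big1 // => k _; rewrite andbF mulr0.
under eq_bigr => k _ do rewrite andbT.
rewrite big_cons -mulrA.
rewrite -(sum_if_eq (z i) (fun k => (e i k ord0)^* * (\prod_(j <- s) (e j (z j) ord0)^* * V z))).
by apply: eq_bigr => k _; case: ifP; rewrite ?mulr0.
Qed.

Unset Implicit Arguments.
Theorem lemma1 (R : realType) (N : nat) (d : 'I_N -> nat)
  (V : multi_index d -> R[i])
  (e : forall i : 'I_N, 'M[R[i]]_((d i).+1))
  (lam : forall i : 'I_N, 'I_(d i).+1 -> R) :
  (0 < N)%N ->
  \sum_(x : multi_index d) `|V x| ^+ 2 = 1 ->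
  (forall (i : 'I_N) (a b : 'I_(d i).+1),
      \sum_(k : 'I_(d i).+1) (e i k a)^* * e i k b = (a == b)%:R) ->
  (forall (i : 'I_N) (a b : 'I_(d i).+1),
      \sum_(k : 'I_(d i).+1) \sum_(l : 'I_(d i).+1)
        (e i k a)^* * reduced_state V i k l * e i l b
      = (a == b)%:R * ((lam i a)%:C)%C) ->
  (forall (i : 'I_N) (a b : 'I_(d i).+1), (a <= b)%N -> lam i b <= lam i a) ->
  let V1 := \sum_(x : multi_index d)
              (\prod_(i : 'I_N) (e i (x i) ord0)^*) * V x in
  let eps := \sum_(i : 'I_N) (1 - lam i ord0) in
  ((1 - eps)%:C)%C <= `|V1| ^+ 2.
Proof.
move=> _ normV ortho hlam _; cbv zeta.
have pP i : proj (Pop e i).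
  by apply: Pop_proj; have := ortho i ord0 ord0; rewrite eqxx.
have H := main_ineq (P := Pop e) (index_enum 'I_N) V pP (Pop_comm e).
have dVV : dot V V = 1.
  by rewrite /dot -normV; apply: eq_bigr => x _; rewrite normCK.
have dP i : dot (Pop e i V) V = ((lam i ord0)%:C)%C.
  by rewrite Pop_lam hlam eqxx mul1r.
have FV x : Fs e V (index_enum 'I_N) x =
   \sum_(x : multi_index d) (\prod_(i : 'I_N) (e i (x i) ord0)^*) * V x.
  rewrite /Fs; apply: eq_bigr => z _.
  rewrite (_ : [forall j, _] = true) //; apply/forallP => j.
  by rewrite mem_index_enum.
set V1 := \sum_(x : multi_index d) _ in FV *.
have dQ : dot (Qop (Pop e) (index_enum 'I_N) V) V = `|V1| ^+ 2.
  rewrite Q_form ?index_enum_uniq // normCK /dot.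
  under eq_bigr => x _ do rewrite FV.
  rewrite {3}/V1 rmorph_sum big_distrr /=; apply: eq_bigr => x _.
  rewrite rmorphM rmorph_prod /=.
  under [in RHS]eq_bigr => i _ do rewrite conjCK.
  ring.
rewrite dVV dQ in H.
rewrite (eq_bigr (fun i => 1 - ((lam i ord0)%:C)%C)) in H; last by move=> i _; rewrite dP.
rewrite -subr_ge0; rewrite -subr_ge0 in H.
rewrite rmorphB rmorph1 rmorph_sum /=.
rewrite (eq_bigr (fun i => 1 - ((lam i ord0)%:C)%C)); last by move=> i _; rewrite rmorphB rmorph1.
move: H; set S := \sum_(i < N) _; set X := `|V1| ^+ 2.
by rewrite (_ : X - (1 - S) = S - (1 - X)) //; ring.
Qed.
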